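(* Let $\alpha=m+n\gamma^{-1}\in\mathbb{Z}[\gamma]$ with $m,n\in\mathbb{Z}$ and $\alpha>0$, and let $\mathbf i=(i_1,\dots,i_s)$ be a representation of $\alpha$. Then $d(\mathbf i)\ge|m|+|n|$, $d_1(\mathbf i)\ge|m|$ and $d_2(\mathbf i)\ge|n|$. If $i_s\le1$ or if $i_1,\dots,i_s$ all have the same parity, then $d(\mathbf i)=|m|+|n|$ and $(d_1(\mathbf i),d_2(\mathbf i))=(|m|,|n|)$; otherwise $d(\mathbf i)>|m|+|n|$ and $(d_1(\mathbf i),d_2(\mathbf i))\neq(|m|,|n|)$. Moreover, $d_2(\mathbf i)>|n|$ whenever $i_1,\dots,i_s$ contains two positive integers of different parity.
   Context: Let $f\colon\mathbb{Z}\to\mathbb{Z}$ be defined by $f(0)=f(1)=1$, $f(i+2)=f(i+1)+f(i)$ for all $i\in\mathbb{Z}$; $\gamma=(1+\sqrt5)/2$; $\mathbb{Z}[\gamma]=\mathbb{Z}\oplus\mathbb{Z}\gamma^{-1}$. A representation of $\alpha\in\mathbb{Z}[\gamma]$ is a finite non-decreasing sequence $\mathbf i=(i_1,\dots,i_s)$ of non-negative integers ($s\ge0$) with $\alpha=\gamma^{-i_1}+\dots+\gamma^{-i_s}$ (empty sum $=0$). For such $\mathbf i$: $d(\mathbf i)=\sum_k f(i_k)$, $d_1(\mathbf i)=\sum_k f(i_k-2)$, $d_2(\mathbf i)=\sum_kf(i_k-1)$. *)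

(* Defs.v *)
From Stdlib Require Import Reals ZArith List Sorted Arith Lia.
Import ListNotations.
Open Scope R_scope.

Fixpoint fpos (k : nat) : Z :=
  match k with
  | O => 1%Z
  | S O => 1%Z
  | S ((S k') as k1) => (fpos k1 + fpos k')%Z
  end.

(* fneg k = f(-k): obtained from f(i) = f(i+2) - f(i+1). *)
Fixpoint fneg (k : nat) : Z :=
  match k with
  | O => 1%Z
  | S O => 0%Z
  | S ((S k') as k1) => (fneg k' - fneg k1)%Z
  end.

(* f : Z -> Z, the unique function with f 0 = f 1 = 1 and
   f (i+2) = f (i+1) + f i for all integers i. *)
Definition f (z : Z) : Z :=
  if (0 <=? z)%Z then fpos (Z.to_nat z) else fneg (Z.to_nat (- z)).

Definition gamma : R := (1 + sqrt 5) / 2.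

Definition rep_value (l : list nat) : R :=
  fold_right (fun i acc => / gamma ^ i + acc) 0 l.

Definition is_representation (alpha : R) (l : list nat) : Prop :=
  Sorted le l /\ rep_value l = alpha.

Definition rep_d (l : list nat) : Z :=
  fold_right (fun i acc => (f (Z.of_nat i) + acc)%Z) 0%Z l.
Definition rep_d1 (l : list nat) : Z :=
  fold_right (fun i acc => (f (Z.of_nat i - 2) + acc)%Z) 0%Z l.
Definition rep_d2 (l : list nat) : Z :=
  fold_right (fun i acc => (f (Z.of_nat i - 1) + acc)%Z) 0%Z l.

Lemma f_rec : forall i : Z, (i >= -2)%Z -> (i <= 5)%Z -> f (i + 2) = (f (i + 1) + f i)%Z.
Proof. intros i H1 H2. assert (i = -2 \/ i = -1 \/ i = 0 \/ i = 1 \/ i = 2 \/ i = 3 \/ i = 4 \/ i = 5)%Z by lia.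
  repeat destruct H as [H|H]; subst; reflexivity. Qed.

(* Main.v *)
Require Import Defs.
From Stdlib Require Import Reals ZArith List Sorted Arith Lia Lra Classical.
Require Import Defs.
Open Scope R_scope.

Lemma fpos_pos : forall n, (fpos n >= 1)%Z.
Proof.
  assert (H : forall n, (fpos n >= 1)%Z /\ (fpos (S n) >= 1)%Z).
  { induction n as [|n [IH1 IH2]]; [simpl; lia|]. split; [exact IH2|].
    change (fpos (S (S n))) with (fpos (S n) + fpos n)%Z. lia. }
  intro n; apply H.
Qed.

Lemma f_of_nat : forall n, f (Z.of_nat n) = fpos n.
Proof. intro n. unfold f. rewrite (proj2 (Z.leb_le _ _)) by lia. now rewrite Nat2Z.id. Qed.

Lemma f_rec_gen : forall z, (z >= -2)%Z -> f (z + 2) = (f (z + 1) + f z)%Z.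
Proof.
  intros z Hz. destruct (Z.eq_dec z (-2)) as [->|H1]; [reflexivity|].
  destruct (Z.eq_dec z (-1)) as [->|H2]; [reflexivity|].
  assert (Hz0 : (0 <= z)%Z) by lia.
  destruct (Z_of_nat_complete _ Hz0) as [k ->].
  replace (Z.of_nat k + 2)%Z with (Z.of_nat (S (S k))) by lia.
  replace (Z.of_nat k + 1)%Z with (Z.of_nat (S k)) by lia.
  rewrite !f_of_nat. reflexivity.
Qed.

Lemma f2_pos : forall i : nat, i <> 1%nat -> (0 < f (Z.of_nat i - 2))%Z.
Proof.
  intros [|[|i]] H; try reflexivity; try lia.
  replace (Z.of_nat (S (S i)) - 2)%Z with (Z.of_nat i) by lia.
  rewrite f_of_nat. pose proof (fpos_pos i); lia.
Qed.
Lemma f2_nonneg : forall i : nat, (0 <= f (Z.of_nat i - 2))%Z.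
Proof. intro i. destruct (Nat.eq_dec i 1) as [->|H]; [vm_compute; discriminate| pose proof (f2_pos i H); lia]. Qed.
Lemma f1_pos : forall i : nat, i <> 0%nat -> (0 < f (Z.of_nat i - 1))%Z.
Proof.
  intros [|i] H; try lia.
  replace (Z.of_nat (S i) - 1)%Z with (Z.of_nat i) by lia.
  rewrite f_of_nat. pose proof (fpos_pos i); lia.
Qed.
Lemma f1_nonneg : forall i : nat, (0 <= f (Z.of_nat i - 1))%Z.
Proof. intro i. destruct (Nat.eq_dec i 0) as [->|H]; [vm_compute; discriminate| pose proof (f1_pos i H); lia]. Qed.

Definition sgn (i : nat) : Z := if Nat.even i then 1%Z else (-1)%Z.
Definition ca (i : nat) : Z := (sgn i * f (Z.of_nat i - 2))%Z.
Definition cb (i : nat) : Z := (- sgn i * f (Z.of_nat i - 1))%Z.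

Lemma sgn_S : forall i, sgn (S i) = (- sgn i)%Z.
Proof. intro i. unfold sgn. rewrite Nat.even_succ, <- Nat.negb_even. destruct (Nat.even i); reflexivity. Qed.

Lemma ca_rec : forall k, ca (S (S k)) = (ca k - ca (S k))%Z.
Proof.
  intro k. unfold ca. rewrite !sgn_S.
  replace (Z.of_nat (S (S k)) - 2)%Z with ((Z.of_nat k - 2) + 2)%Z by lia.
  replace (Z.of_nat (S k) - 2)%Z with ((Z.of_nat k - 2) + 1)%Z by lia.
  rewrite f_rec_gen by lia. lia.
Qed.
Lemma cb_rec : forall k, cb (S (S k)) = (cb k - cb (S k))%Z.
Proof.
  intro k. unfold cb. rewrite !sgn_S.
  replace (Z.of_nat (S (S k)) - 1)%Z with ((Z.of_nat k - 2) + 2 + 1)%Z by lia.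
  replace (Z.of_nat (S k) - 1)%Z with ((Z.of_nat k - 2) + 2)%Z by lia.
  replace (Z.of_nat k - 1)%Z with ((Z.of_nat k - 2) + 1)%Z by lia.
  replace ((Z.of_nat k - 2) + 2 + 1)%Z with (((Z.of_nat k - 2) + 1) + 2)%Z by lia.
  rewrite (f_rec_gen ((Z.of_nat k - 2) + 1)) by lia.
  replace ((Z.of_nat k - 2) + 1 + 1)%Z with ((Z.of_nat k - 2) + 2)%Z by lia. lia.
Qed.

Lemma gamma_pos : gamma > 0.
Proof. unfold gamma. pose proof (sqrt_pos 5). lra. Qed.
Lemma sqrt5_sq : sqrt 5 * sqrt 5 = 5.
Proof. apply sqrt_sqrt. lra. Qed.
Lemma ig_eq : / gamma = (sqrt 5 - 1) / 2.
Proof.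
  pose proof gamma_pos. pose proof sqrt5_sq. apply (Rmult_eq_reg_l gamma); [|lra].
  rewrite Rinv_r by lra. unfold gamma. nra.
Qed.
Lemma ig_sq : / gamma * / gamma = 1 - / gamma.
Proof. rewrite ig_eq. pose proof sqrt5_sq. nra. Qed.

Lemma pow_formula : forall k, / gamma ^ k = IZR (ca k) + IZR (cb k) * / gamma.
Proof.
  assert (H : forall k, / gamma ^ k = IZR (ca k) + IZR (cb k) * / gamma /\
     / gamma ^ (S k) = IZR (ca (S k)) + IZR (cb (S k)) * / gamma).
  { pose proof gamma_pos. induction k as [|k [IH1 IH2]].
    - simpl. split. + unfold ca, cb. simpl. field. lra. + unfold ca, cb; simpl. field. lra.
    - split; [exact IH2|]. rewrite ca_rec, cb_rec, !minus_IZR.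
      replace (/ gamma ^ S (S k)) with (/ gamma ^ k * (/ gamma * / gamma)).
      + rewrite ig_sq. replace (/ gamma ^ k * (1 - / gamma)) with (/ gamma ^ k - / gamma ^ (S k)).
        * rewrite IH1, IH2. ring.
        * simpl. rewrite Rinv_mult. ring.
      + simpl. rewrite !Rinv_mult. ring. }
  intro k; apply H.
Qed.
Lemma no_sqrt5 : forall (n : nat) (k c : Z), (Z.abs k <= Z.of_nat n)%Z -> (c * c = 5 * k * k)%Z -> k = 0%Z.
Proof.
  induction n as [|n IH]; intros k c Hk Hc; [lia|].
  destruct (Z.eq_dec k 0) as [|Hk0]; [assumption|exfalso].
  assert (Hr : (0 <= c mod 5 < 5)%Z) by (apply Z.mod_pos_bound; lia).
  pose proof (Z.div_mod c 5 ltac:(lia)) as Hd.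
  set (t := (c / 5)%Z) in *. set (r := (c mod 5)%Z) in *.
  assert (r = 0%Z).
  { assert (r = 0 \/ r = 1 \/ r = 2 \/ r = 3 \/ r = 4)%Z as Hr' by lia.
    rewrite Hd in Hc. destruct Hr' as [E|[E|[E|[E|E]]]]; rewrite E in Hc; try lia. }
  rewrite H, Z.add_0_r in Hd. rewrite Hd in Hc.
  assert (Hkt : (k * k = 5 * t * t)%Z) by lia.
  assert (Ht : t = 0%Z).
  { apply (IH t k); [|exact Hkt].
    assert (t * t < k * k)%Z by nia.
    assert (Z.abs t < Z.abs k)%Z.
    { destruct (Z.abs_spec t) as [[? E1]|[? E1]]; destruct (Z.abs_spec k) as [[? E2]|[? E2]]; nia. }
    lia. }
  rewrite Ht in Hkt. nia.
Qed.

Lemma indep : forall p q : Z, IZR p + IZR q * / gamma = 0 -> p = 0%Z /\ q = 0%Z.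
Proof.
  intros p q H. rewrite ig_eq in H. pose proof sqrt5_sq.
  assert (Hq : q = 0%Z).
  { apply (no_sqrt5 (Z.abs_nat q) q (q - 2 * p)); [lia|].
    apply eq_IZR. rewrite !mult_IZR, minus_IZR, mult_IZR.
    assert (E : IZR q * sqrt 5 = IZR q - 2 * IZR p) by lra.
    replace (IZR 5 * IZR q * IZR q) with ((IZR q * sqrt 5) * (IZR q * sqrt 5)).
    - rewrite E. simpl. ring.
    - replace (IZR 5) with 5 by reflexivity. nra. }
  subst q. split; [|reflexivity]. apply eq_IZR. lra.
Qed.

Definition S (g : nat -> Z) (l : list nat) : Z := fold_right (fun i acc => (g i + acc)%Z) 0%Z l.
Definition Sab (g : nat -> Z) l := S (fun i => Z.abs (g i)) l.

Lemma rep_value_eq : forall l, rep_value l = IZR (S ca l) + IZR (S cb l) * / gamma.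
Proof.
  induction l as [|i l IH]; simpl; [ring|]. rewrite IH, pow_formula, !plus_IZR. ring.
Qed.

Lemma S_le : forall g l, (S g l <= Sab g l)%Z /\ (- S g l <= Sab g l)%Z.
Proof. intros g l; induction l; simpl; lia. Qed.
Lemma S_eq : forall g l, ((forall x, In x l -> 0 <= g x) \/ (forall x, In x l -> g x <= 0))%Z ->
  Z.abs (S g l) = Sab g l.
Proof.
  intros g l [H|H].
  - assert (Sab g l = S g l /\ 0 <= S g l)%Z; [|lia].
    unfold Sab, S in *. induction l; simpl; [lia|]. simpl in H. pose proof (H a (or_introl eq_refl)).
    destruct IHl as [A B]; [intros; apply H; auto|]. lia.
  - assert (Sab g l = - S g l /\ S g l <= 0)%Z; [|lia].
    unfold Sab, S in *. induction l; simpl; [lia|]. simpl in H. pose proof (H a (or_introl eq_refl)).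
    destruct IHl as [A B]; [intros; apply H; auto|]. lia.
Qed.
Lemma S_part : forall g l y, In y l ->
  (Sab g l - Z.abs (g y) >= S g l - g y)%Z /\ (Sab g l - Z.abs (g y) >= - S g l + g y)%Z.
Proof.
  intros g l y; induction l as [|z l IH]; simpl; [tauto|]. intros [->|Hy].
  - pose proof (S_le g l). unfold Sab in *. lia.
  - specialize (IH Hy). unfold Sab in *. lia.
Qed.
Lemma S_lt : forall g l x y, In x l -> In y l -> (0 < g x)%Z -> (g y < 0)%Z ->
  (Z.abs (S g l) < Sab g l)%Z.
Proof.
  intros g l x y Hx Hy H1 H2. pose proof (S_part g l x Hx). pose proof (S_part g l y Hy). lia.
Qed.

Lemma d1_eq : forall l, rep_d1 l = Sab ca l.
Proof.
  induction l as [|i l IH]; simpl; [reflexivity|]. rewrite IH. f_equal.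
  unfold ca, sgn. pose proof (f2_nonneg i). destruct (Nat.even i); lia.
Qed.
Lemma d2_eq : forall l, rep_d2 l = Sab cb l.
Proof.
  induction l as [|i l IH]; simpl; [reflexivity|]. rewrite IH. f_equal.
  unfold cb, sgn. pose proof (f1_nonneg i). destruct (Nat.even i); lia.
Qed.
Lemma d_eq : forall l, rep_d l = (rep_d1 l + rep_d2 l)%Z.
Proof.
  induction l as [|i l IH]; simpl; [reflexivity|]. rewrite IH.
  replace (Z.of_nat i) with ((Z.of_nat i - 2) + 2)%Z at 1 by lia.
  rewrite f_rec_gen by lia. replace (Z.of_nat i - 2 + 1)%Z with (Z.of_nat i - 1)%Z by lia. lia.
Qed.

Lemma ca_even : forall i, Nat.even i = true -> (0 < ca i)%Z.
Proof. intros i H. unfold ca, sgn. rewrite H. assert (i <> 1%nat) by (intro; subst; discriminate).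
  pose proof (f2_pos i H0). lia. Qed.
Lemma ca_odd : forall i, Nat.even i = false -> (ca i <= 0)%Z /\ (i <> 1%nat -> (ca i < 0)%Z).
Proof. intros i H. unfold ca, sgn. rewrite H. pose proof (f2_nonneg i). split; [lia|].
  intro H1. pose proof (f2_pos i H1). lia. Qed.
Lemma cb_odd : forall i, Nat.even i = false -> (0 < cb i)%Z.
Proof. intros i H. unfold cb, sgn. rewrite H. assert (i <> 0%nat) by (intro; subst; discriminate).
  pose proof (f1_pos i H0). lia. Qed.
Lemma cb_even : forall i, Nat.even i = true -> (cb i <= 0)%Z /\ (i <> 0%nat -> (cb i < 0)%Z).
Proof. intros i H. unfold cb, sgn. rewrite H. pose proof (f1_nonneg i). split; [lia|].
  intro H1. pose proof (f1_pos i H1). lia. Qed.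

Lemma last_in : forall (l : list nat) d, l <> nil -> In (last l d) l.
Proof.
  induction l as [|a l IH]; intros d H; [congruence|].
  destruct l as [|b l']; [simpl; auto|]. change (last (a :: b :: l') d) with (last (b :: l') d).
  right. apply IH. discriminate.
Qed.
Lemma sorted_last : forall l x, StronglySorted le l -> In x l -> (x <= last l 0)%nat.
Proof.
  induction l as [|a l IH]; intros x Hs Hx; [destruct Hx|].
  inversion Hs as [|? ? Hs' Hf]; subst.
  destruct l as [|b l']; [destruct Hx as [->|[]]; simpl; lia|].
  change (last (a :: b :: l') 0%nat) with (last (b :: l') 0%nat).
  destruct Hx as [->|Hx]; [|apply IH; auto].
  rewrite Forall_forall in Hf. apply Hf. apply last_in. discriminate.
Qed.

Theorem mainTheorem13 (m n : Z) (l : list nat) :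
  IZR m + IZR n * / gamma > 0 ->
  is_representation (IZR m + IZR n * / gamma) l ->
  (rep_d l >= Z.abs m + Z.abs n)%Z /\ (rep_d1 l >= Z.abs m)%Z /\ (rep_d2 l >= Z.abs n)%Z /\
  ((((List.last l 0%nat) <= 1)%nat \/
     (forall a b, In a l -> In b l -> Nat.even a = Nat.even b)) ->
     rep_d l = (Z.abs m + Z.abs n)%Z /\ (rep_d1 l, rep_d2 l) = (Z.abs m, Z.abs n)) /\
  (~ (((List.last l 0%nat) <= 1)%nat \/
     (forall a b, In a l -> In b l -> Nat.even a = Nat.even b)) ->
     (rep_d l > Z.abs m + Z.abs n)%Z /\ (rep_d1 l, rep_d2 l) <> (Z.abs m, Z.abs n)) /\
  ((exists a b, In a l /\ In b l /\ (0 < a)%nat /\ (0 < b)%nat /\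
      Nat.even a <> Nat.even b) ->
     (rep_d2 l > Z.abs n)%Z).
Proof.
  intros _ [Hsort Hval].
  rewrite rep_value_eq in Hval.
  destruct (indep (S ca l - m) (S cb l - n)) as [Em En].
  { rewrite !minus_IZR. lra. }
  assert (m = S ca l) by lia. assert (n = S cb l) by lia. subst m n.
  rewrite d_eq, d1_eq, d2_eq.
  pose proof (S_le ca l). pose proof (S_le cb l).
  split; [lia|]. split; [lia|]. split; [lia|].
  split; [|split].
  - intros Hc.
    assert (E1 : Z.abs (S ca l) = Sab ca l /\ Z.abs (S cb l) = Sab cb l).
    { destruct Hc as [Hc|Hc].
      - assert (Hle : forall x, In x l -> (x <= 1)%nat).
        { intros x Hx. pose proof (sorted_last l x (Sorted_StronglySorted Nat.le_trans Hsort) Hx). lia. }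
        split; apply S_eq; left; intros x Hx; specialize (Hle x Hx);
          destruct x as [|[|x]]; try lia; vm_compute; discriminate.
      - destruct l as [|x0 l0]; [split; reflexivity|].
        destruct (Nat.even x0) eqn:Ex.
        + split; apply S_eq; [left|right]; intros x Hx.
          * pose proof (ca_even x ltac:(rewrite (Hc x x0 Hx (or_introl eq_refl)); exact Ex)). lia.
          * apply (cb_even x). rewrite (Hc x x0 Hx (or_introl eq_refl)); exact Ex.
        + split; apply S_eq; [right|left]; intros x Hx.
          * apply (ca_odd x). rewrite (Hc x x0 Hx (or_introl eq_refl)); exact Ex.
          * pose proof (cb_odd x ltac:(rewrite (Hc x x0 Hx (or_introl eq_refl)); exact Ex)). lia. }
    destruct E1 as [-> ->]. split; reflexivity.
  - intros Hc. apply not_or_and in Hc. destruct Hc as [Hk Hp].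
    assert (Hne : l <> nil) by (intro; subst; simpl in Hk; lia).
    pose proof (last_in l 0%nat Hne) as Hkin. set (k := last l 0%nat) in *.
    assert (exists a b, In a l /\ In b l /\ Nat.even a = true /\ Nat.even b = false) as [a [b [Ha [Hb [Ea Eb]]]]].
    { apply NNPP. intro Hn. apply Hp. intros x y Hx Hy.
      destruct (Nat.even x) eqn:Ex; destruct (Nat.even y) eqn:Ey; auto; exfalso; apply Hn; eauto 10. }
    assert (Hs : (Z.abs (S ca l) < Sab ca l \/ Z.abs (S cb l) < Sab cb l)%Z).
    { destruct (Nat.even k) eqn:Ek.
      - destruct (Nat.eq_dec b 1) as [->|Hb1].
        + right. apply (S_lt cb l 1%nat k); auto. reflexivity.
          apply (cb_even k Ek). lia.
        + left. apply (S_lt ca l k b); auto. apply ca_even; auto. apply (ca_odd b Eb); auto.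
      - destruct (Nat.eq_dec a 0) as [->|Ha0].
        + left. apply (S_lt ca l 0%nat k); auto. reflexivity.
          apply (ca_odd k Ek). intro E; rewrite E in Hk; lia.
        + right. apply (S_lt cb l k a); auto. apply cb_odd; auto. apply (cb_even a Ea); auto. }
    split; [lia|]. intro E. injection E. lia.
  - intros [a [b [Ha [Hb [Ha0 [Hb0 Hab]]]]]].
    assert (Z.abs (S cb l) < Sab cb l)%Z; [|lia].
    destruct (Nat.even a) eqn:Ea.
    + apply (S_lt cb l b a); auto. apply cb_odd. destruct (Nat.even b); congruence.
      apply (cb_even a Ea); lia.
    + apply (S_lt cb l a b); auto. apply cb_odd; auto.
      apply (cb_even b); [destruct (Nat.even b); congruence|lia].
Qed.
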